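(* Let $n=2k+1$ with $k\ge 1$. Then $\{d_i : i=1,2,\ldots,n\}$ is a strong resolving set of $S_n$.
   Context: For $n\ge 3$, $S_n$ is the graph with vertex set $\{a_i,b_i,c_i,d_i : 1\le i\le n\}$ and edge set $\{a_ia_{i+1}, b_ib_{i+1}, c_ic_{i+1}, d_id_{i+1}, a_{i+1}b_i, a_ib_i, b_ic_i, c_id_i : 1\le i\le n\}$, indices taken modulo $n$. $d$ is the graph distance. A vertex $w$ strongly resolves distinct vertices $u,v$ if $d(v,w)=d(v,u)+d(u,w)$ or $d(u,w)=d(u,v)+d(v,w)$. A set $S$ is a strong resolving set if every two distinct vertices are strongly resolved by some vertex of $S$. *)

(* Defs.v *)
From mathcomp Require Import all_boot.
Set Implicit Arguments. Unset Strict Implicit. Unset Printing Implicit Defensive.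

(** Generic graph distance for a relation [e] on a finite type [T]:
    [walkb e k u v] holds iff there is a walk of length exactly [k] from u to v;
    [gdist e u v] is the least such [k] (searched in [0, #|T|)); for a
    connected graph this is the usual graph distance (every distance is < #|T|). *)
Definition walkb (T : finType) (e : rel T) (k : nat) (u v : T) : bool :=
  [exists p : k.-tuple T, path e u p && (last u p == v)].

Definition gdist (T : finType) (e : rel T) (u v : T) : nat :=
  find (fun k => walkb e k u v) (iota 0 #|T|).

Definition strongly_resolves (T : finType) (e : rel T) (w u v : T) : Prop :=
  gdist e v w = gdist e v u + gdist e u w \/ gdist e u w = gdist e u v + gdist e v w.

Definition strong_resolving_set (T : finType) (e : rel T) (S : {set T}) : Prop :=
  forall u v : T, u != v -> exists2 w, w \in S & strongly_resolves e w u v.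

(** The graph S_n. Vertex (x, i) with x : 'I_4 encodes a_i (x=0), b_i (x=1),
    c_i (x=2), d_i (x=3); i : 'I_n is the index (0-based, taken mod n). *)
Definition Sv (n : nat) := ('I_4 * 'I_n)%type.

Definition succ_mod (n : nat) (i j : 'I_n) : bool := (j : nat) == (i.+1 %% n).

Definition Sadj0 (n : nat) (u v : Sv n) : bool :=
  let: (x, i) := u in let: (y, j) := v in
  [|| (x == y) && succ_mod i j
    , [&& (x : nat) == 0, (y : nat) == 1 & succ_mod j i]
    , [&& (x : nat) == 0, (y : nat) == 1 & i == j]
    , [&& (x : nat) == 1, (y : nat) == 2 & i == j]
    | [&& (x : nat) == 2, (y : nat) == 3 & i == j] ].

Definition Sadj (n : nat) : rel (Sv n) := fun u v => Sadj0 u v || Sadj0 v u.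

Definition Dset (n : nat) : {set Sv n} := [set v : Sv n | (v.1 : nat) == 3].

(* Main.v *)
Require Import Defs.
From mathcomp Require Import all_boot.
From mathcomp Require Import zify.
Set Implicit Arguments. Unset Strict Implicit.

Section G.
Variable m : nat.
Hypothesis hm : 2 <= m.
Local Notation n := m.+1.
Local Notation T := (Sv n).
Local Notation e := (@Sadj n).

Definition P (u : T) : nat := 2 * u.2 + minn 1 u.1.
Definition cd (p q : nat) := minn (p - q + (q - p)) (2 * n - (p - q + (q - p))).
Definition D (u v : T) := (u.1 - v.1 + (v.1 - u.1)) + cd (P u) (P v) %/ 2.

Definition sm (i j : nat) := (j == i.+1) || (i == m) && (j == 0).

Lemma smE (i j : 'I_n) : ((j : nat) == i.+1 %% n) = sm i j.
Proof.
rewrite /sm; have := ltn_ord i; have := ltn_ord j.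
case: (ltnP i m) => H Hj Hi.
  by rewrite modn_small // (_ : (i == m :> nat) = false) ?andbF ?orbF //; lia.
have -> : (i : nat) = m by lia.
rewrite modnn eqxx /=; lia.
Qed.

Definition A0 (x i y j : nat) :=
  [|| (x == y) && sm i j
    , [&& x == 0, y == 1 & sm j i]
    , [&& x == 0, y == 1 & i == j]
    , [&& x == 1, y == 2 & i == j]
    | [&& x == 2, y == 3 & i == j] ].

Lemma SadjE (u v : T) : e u v = A0 u.1 u.2 v.1 v.2 || A0 v.1 v.2 u.1 u.2.
Proof.
case: u v => [x i] [y j]; rewrite /Sadj /Sadj0 /succ_mod !smE /=.
by [].
Qed.

Lemma cd_tri p q r : p < 2 * n -> q < 2 * n -> r < 2 * n ->
  cd p r <= cd p q + cd q r.
Proof. rewrite /cd; lia. Qed.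

Lemma cd_sym p q : cd p q = cd q p.
Proof. rewrite /cd; lia. Qed.

Lemma cd_par p q : p < 2 * n -> q < 2 * n -> (cd p q + p + q) %% 2 = 0.
Proof. rewrite /cd; lia. Qed.

Lemma cd_le p q : cd p q <= n.
Proof. rewrite /cd; lia. Qed.

Lemma cd0 p q : p < 2 * n -> q < 2 * n -> (cd p q == 0) = (p == q).
Proof. rewrite /cd; lia. Qed.

Lemma P_lt (u : T) : P u < 2 * n.
Proof. case: u => x i; rewrite /P /=; have := ltn_ord i; lia. Qed.

Definition St (x y p q : nat) :=
  (x = y /\ cd p q = 2) \/ ((x = y.+1 \/ y = x.+1) /\ p = q) \/
  ((x = 0 /\ y = 1 \/ x = 1 /\ y = 0) /\ cd p q = 1).

Lemma A0_St x i y j : x < 4 -> y < 4 -> i < n -> j < n -> A0 x i y j ->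
  St x y (2 * i + minn 1 x) (2 * j + minn 1 y).
Proof.
move=> hx hy hi hj; rewrite /A0 /St /sm.
rewrite /cd; lia.
Qed.

Lemma St_sym x y p q : St x y p q -> St y x q p.
Proof. rewrite /St cd_sym; lia. Qed.

Lemma adj_St (u w : T) : e u w -> St u.1 w.1 (P u) (P w).
Proof.
case: u w => [x i] [y j]; rewrite SadjE /P /=.
have := ltn_ord x; have := ltn_ord y; have := ltn_ord i; have := ltn_ord j.
move=> ? ? ? ?; case/orP => H.
  exact: A0_St.
by apply: St_sym; apply: A0_St.
Qed.

Lemma lip (u w v : T) : e u w -> D u v <= D w v + 1.
Proof.
move=> /adj_St; rewrite /D.
have := cd_tri (P_lt u) (P_lt w) (P_lt v).
have := cd_tri (P_lt w) (P_lt u) (P_lt v).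
have := cd_par (P_lt u) (P_lt v).
have := cd_par (P_lt w) (P_lt v).
rewrite (cd_sym (P w) (P u)).
have hpu : P u = 2 * u.2 + minn 1 u.1 by [].
have hpw : P w = 2 * w.2 + minn 1 w.1 by [].
have hpv : P v = 2 * v.2 + minn 1 v.1 by [].
move: hpu hpw hpv; rewrite /St.
set pu := P u; set pw := P w; set pv := P v.
set c1 := cd pu pv; set c2 := cd pw pv; set c12 := cd pu pw.
have h0 : pu = pw -> c12 = 0 by rewrite /c12 => ->; rewrite /cd; lia.
clearbody pu pw pv c1 c2 c12; lia.
Qed.

Definition nxt (i : 'I_n) : 'I_n := inord (if i < m then i.+1 else 0).
Definition prv (i : 'I_n) : 'I_n := inord (if 0 < i then i.-1 else m).
Definition o4 (a : nat) : 'I_4 := inord a.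

Lemma nxtE (i : 'I_n) : (i < m /\ nxt i = i.+1 :> nat) \/ (i = m :> nat /\ nxt i = 0 :> nat).
Proof.
have := ltn_ord i; rewrite /nxt; case: (ltnP i m) => H1 H2; rewrite inordK //; lia.
Qed.

Lemma prvE (i : 'I_n) : (0 < i /\ prv i = i.-1 :> nat) \/ (i = 0 :> nat /\ prv i = m :> nat).
Proof.
have := ltn_ord i; rewrite /prv; case: (ltnP 0 i) => H1 H2; rewrite inordK //; lia.
Qed.

Lemma o4E a : a < 4 -> (o4 a : nat) = a.
Proof. by move=> h; rewrite /o4 inordK. Qed.

Lemma adj_nxt (x : 'I_4) i : e (x, i) (x, nxt i).
Proof.
rewrite SadjE; apply/orP; left; rewrite /A0 /= eqxx /=; apply/orP; left.
rewrite /sm; case: (nxtE i) => [[_ ->]|[-> ->]]; by rewrite eqxx ?orbT.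
Qed.

Lemma adj_prv (x : 'I_4) i : e (x, i) (x, prv i).
Proof.
rewrite SadjE; apply/orP; right; rewrite /A0 /= eqxx /=; apply/orP; left.
rewrite /sm; case: (prvE i) => [[H ->]|[-> ->]]; last by rewrite eqxx ?orbT.
by rewrite prednK // eqxx.
Qed.

Lemma adj_up (x : 'I_4) i : x < 3 -> e (x, i) (o4 x.+1, i).
Proof.
move=> h; rewrite SadjE; apply/orP; left; rewrite /A0 /= o4E //.
by case: x h => [[|[|[|[|x]]]] hx] //= _; rewrite ?eqxx ?orbT.
Qed.

Lemma adj_dn (x : 'I_4) i : 0 < x -> e (x, i) (o4 x.-1, i).
Proof.
move=> h; rewrite SadjE; apply/orP; right; rewrite /A0 /= o4E /= ?eqxx.
  by case: x h => [[|[|[|[|x]]]] hx] //= _; rewrite ?eqxx ?orbT.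
by case: x h => [[|[|[|[|x]]]] hx] //= _; rewrite ?eqxx ?orbT.
Qed.

Lemma adj_ab (x : 'I_4) i : x = 0 :> nat -> e (x, i) (o4 1, prv i).
Proof.
move=> h; rewrite SadjE; apply/orP; left; rewrite /A0 /= o4E // h /=.
rewrite /sm; case: (prvE i) => [[H ->]|[-> ->]]; last by rewrite eqxx ?orbT.
by rewrite prednK // eqxx.
Qed.

Lemma adj_ba (x : 'I_4) i : x = 1 :> nat -> e (x, i) (o4 0, nxt i).
Proof.
move=> h; rewrite SadjE; apply/orP; right; rewrite /A0 /= o4E // h /=.
rewrite /sm; case: (nxtE i) => [[_ ->]|[-> ->]]; by rewrite eqxx ?orbT.
Qed.

Lemma cd_spec p q : p < 2 * n -> q < 2 * n -> exists a,
  [/\ p = q + a \/ q = p + a, cd p q <= a, cd p q + a <= 2 * n &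
      cd p q = a \/ cd p q + a = 2 * n].
Proof. move=> hp hq; exists (p - q + (q - p)); split; rewrite /cd; lia. Qed.

Lemma step p q s p1 p2 : p < 2 * n -> q < 2 * n -> s <= cd p q ->
  (p + s < 2 * n /\ p1 = p + s) \/ (2 * n <= p + s /\ p1 + 2 * n = p + s) ->
  (s <= p /\ p2 + s = p) \/ (p < s /\ p2 + s = p + 2 * n) ->
  cd p1 q + s = cd p q \/ cd p2 q + s = cd p q.
Proof.
move=> hp hq hs; have [a [? ? ? ?]] := cd_spec hp hq.
move=> e1 e2.
have hp1 : p1 < 2 * n by lia.
have hp2 : p2 < 2 * n by lia.
have [b [? ? ? ?]] := cd_spec hp1 hq.
have [c [? ? ? ?]] := cd_spec hp2 hq.
lia.
Qed.

Lemma cd_ge p q s : p < 2 * n -> q < 2 * n -> p != q -> (p + q) %% 2 = s %% 2 ->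
  1 <= s <= 2 -> s <= cd p q /\ (cd p q + s) %% 2 = 0.
Proof. move=> hp hq hpq hs hs2; have [a [? ? ? ?]] := cd_spec hp hq; lia. Qed.

Lemma descent (u v : T) : u != v -> exists2 w, e u w & D w v < D u v.
Proof.
case: u v => [x i] [y j] Huv.
have Hne : (x : nat) != y \/ (i : nat) != j.
  apply/orP; move: Huv; apply: contraR; rewrite negb_or !negbK.
  by case/andP => /eqP h1 /eqP h2; apply/eqP; congr pair; apply: val_inj.
have hx := ltn_ord x; have hy := ltn_ord y; have hi := ltn_ord i; have hj := ltn_ord j.
have HN := nxtE i; have HP := prvE i.
have hq := P_lt (y, j).
have hp := P_lt (x, i).
have Pq : P (y, j) = 2 * j + minn 1 y by [].
have Pp : P (x, i) = 2 * i + minn 1 x by [].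
case: (ltngtP x y) => Hxy.
  case: (posnP x) => Hx0.
    have [s1 s2] := @cd_ge (P (x, i)) (P (y, j)) 1 hp hq ltac:(lia) ltac:(lia) ltac:(lia).
    have P1 : P (o4 1, i) = 2 * i + 1 by rewrite /P /= o4E //; lia.
    have P2 : P (o4 1, prv i) = 2 * prv i + 1 by rewrite /P /= o4E //; lia.
    have [H|H] := @step (P (x, i)) (P (y, j)) 1 (P (o4 1, i)) (P (o4 1, prv i))
       hp hq s1 ltac:(lia) ltac:(lia).
      exists (o4 1, i); first by have := @adj_up x i; rewrite Hx0; apply.
      rewrite /D /= o4E //; lia.
    exists (o4 1, prv i); first by apply: adj_ab.
    rewrite /D /= o4E //; lia.
  exists (o4 x.+1, i); first by apply: adj_up; lia.
  have P1 : P (o4 x.+1, i) = P (x, i) by rewrite /P /= o4E //; lia.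
  rewrite /D P1 /= o4E //; lia.
case: (eqVneq (x : nat) 1) => Hx1.
  have [s1 s2] := @cd_ge (P (x, i)) (P (y, j)) 1 hp hq ltac:(lia) ltac:(lia) ltac:(lia).
  have P1 : P (o4 0, nxt i) = 2 * nxt i by rewrite /P /= o4E //; lia.
  have P2 : P (o4 0, i) = 2 * i by rewrite /P /= o4E //; lia.
  have [H|H] := @step (P (x, i)) (P (y, j)) 1 (P (o4 0, nxt i)) (P (o4 0, i))
     hp hq s1 ltac:(lia) ltac:(lia).
    exists (o4 0, nxt i); first by apply: adj_ba.
    rewrite /D /= o4E //; lia.
  exists (o4 0, i); first by have := @adj_dn x i; rewrite Hx1; apply.
  rewrite /D /= o4E //; lia.
exists (o4 x.-1, i); first by apply: adj_dn; lia.
have P1 : P (o4 x.-1, i) = P (x, i) by rewrite /P /= o4E //; lia.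
rewrite /D P1 /= o4E //; lia.
have [s1 s2] := @cd_ge (P (x, i)) (P (y, j)) 2 hp hq ltac:(lia) ltac:(lia) ltac:(lia).
have P1 : P (x, nxt i) = 2 * nxt i + minn 1 x by [].
have P2 : P (x, prv i) = 2 * prv i + minn 1 x by [].
have [H|H] := @step (P (x, i)) (P (y, j)) 2 (P (x, nxt i)) (P (x, prv i))
   hp hq s1 ltac:(lia) ltac:(lia).
  exists (x, nxt i); first by apply: adj_nxt.
  rewrite /D /=; lia.
exists (x, prv i); first by apply: adj_prv.
rewrite /D /=; lia.
Qed.

Lemma D_refl (u : T) : D u u = 0.
Proof. rewrite /D /cd; lia. Qed.

Lemma D_path (p : seq T) (u : T) : path e u p -> D u (last u p) <= size p.
Proof.
elim: p u => [|x p IH] u /=; first by rewrite D_refl.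
case/andP => hux hp; have := lip (last x p) hux; have := IH _ hp; lia.
Qed.

Lemma walk_le k (u v : T) : walkb e k u v -> D u v <= k.
Proof.
case/existsP => p /andP [hp /eqP <-]; have := D_path hp; by rewrite size_tuple.
Qed.

Lemma walk_ex k : forall (u v : T), D u v = k -> walkb e k u v.
Proof.
elim: k => [|k IH] u v H.
  case: (eqVneq u v) => [<-|huv].
    by apply/existsP; exists [tuple]; rewrite /= eqxx.
  by case: (descent huv) => w _; rewrite H.
case: (eqVneq u v) => [huv|huv]; first by rewrite huv D_refl in H.
case: (descent huv) => w hw hlt.
have := lip v hw; rewrite H => hle.
have /existsP [p /andP [hp hl]] := IH w v ltac:(lia).
apply/existsP; exists [tuple of w :: p]; rewrite /= hw hp /=; exact: hl.
Qed.

Lemma find_eq (a : pred nat) N d : d < N -> a d -> (forall j, j < d -> ~~ a j) ->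
  find a (iota 0 N) = d.
Proof.
move=> hdN had hlt.
have hin : has a (iota 0 N) by apply/hasP; exists d; rewrite ?mem_iota.
have hf := hin; rewrite has_find size_iota in hf.
have hnth := nth_find 0 hin; rewrite nth_iota // add0n in hnth.
case: (ltngtP (find a (iota 0 N)) d) => // h.
  by have := hlt _ h; rewrite hnth.
have := before_find 0 h; rewrite nth_iota // ?add0n had //; lia.
Qed.

Lemma gdistE (u v : T) : gdist e u v = D u v.
Proof.
apply: find_eq.
- rewrite card_prod !card_ord /D; have := cd_le (P u) (P v).
  have := ltn_ord u.1; have := ltn_ord v.1; lia.
- by apply: walk_ex.
- by move=> j hj; apply/negP => /walk_le; lia.
Qed.

Lemma eq_even K p q T : m = 2 * K -> p < 2 * n -> q < 2 * n -> T < 2 * n ->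
  p %% 2 = 0 -> T + 2 * n = p + (2 * K).+1 \/ T = p + (2 * K).+1 ->
  cd p T %/ 2 = cd p q %/ 2 + cd q T %/ 2.
Proof.
move=> hK hp hq hT hpar hTe.
have [a [? ? ? ?]] := cd_spec hp hq.
have [b [? ? ? ?]] := cd_spec hp hT.
have [c [? ? ? ?]] := cd_spec hq hT.
lia.
Qed.

Lemma eq_fwd K p q T : m = 2 * K -> p < 2 * n -> q < 2 * n -> T < 2 * n ->
  p %% 2 = 1 -> q %% 2 = 1 ->
  (p <= q /\ q <= p + 2 * K) \/ (q < p /\ q + 2 * n <= p + 2 * K) ->
  T + 2 * n = p + 2 * K \/ T = p + 2 * K ->
  cd p T %/ 2 = cd p q %/ 2 + cd q T %/ 2.
Proof.
move=> hK hp hq hT hpar hqar hf hTe.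
have [a [? ? ? ?]] := cd_spec hp hq.
have [b [? ? ? ?]] := cd_spec hp hT.
have [c [? ? ? ?]] := cd_spec hq hT.
lia.
Qed.

Lemma eq_bwd K p q T : m = 2 * K -> p < 2 * n -> q < 2 * n -> T < 2 * n ->
  p %% 2 = 1 -> q %% 2 = 1 ->
  ~ ((p <= q /\ q <= p + 2 * K) \/ (q < p /\ q + 2 * n <= p + 2 * K)) ->
  T + 2 * K = p \/ T + 2 * K = p + 2 * n ->
  cd p T %/ 2 = cd p q %/ 2 + cd q T %/ 2.
Proof.
move=> hK hp hq hT hpar hqar hf hTe.
have [a [? ? ? ?]] := cd_spec hp hq.
have [b [? ? ? ?]] := cd_spec hp hT.
have [c [? ? ? ?]] := cd_spec hq hT.
lia.
Qed.

Lemma pickT K p q : m = 2 * K -> p < 2 * n -> q < 2 * n ->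
  (p %% 2 = 1 -> q %% 2 = 1) ->
  exists T, [/\ T < 2 * n, T %% 2 = 1 & cd p T %/ 2 = cd p q %/ 2 + cd q T %/ 2].
Proof.
move=> hK hp hq hpq.
case: (eqVneq (p %% 2) 0) => hpar.
  case: (ltnP (p + (2 * K).+1) (2 * n)) => h.
    exists (p + (2 * K).+1); split; [lia | lia | apply: (@eq_even K) => //; lia].
  exists (p + (2 * K).+1 - 2 * n); split; [lia | lia | apply: (@eq_even K) => //; lia].
have hpo : p %% 2 = 1 by lia.
have hqo := hpq hpo.
case: (boolP ((p <= q) && (q <= p + 2 * K) || (q < p) && (q + 2 * n <= p + 2 * K))) => hf.
  have hf' : (p <= q /\ q <= p + 2 * K) \/ (q < p /\ q + 2 * n <= p + 2 * K) by lia.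
  case: (ltnP (p + 2 * K) (2 * n)) => h.
    exists (p + 2 * K); split; [lia | lia | apply: (@eq_fwd K) => //; lia].
  exists (p + 2 * K - 2 * n); split; [lia | lia | apply: (@eq_fwd K) => //; lia].
have hf' : ~ ((p <= q /\ q <= p + 2 * K) \/ (q < p /\ q + 2 * n <= p + 2 * K)) by lia.
case: (leqP (2 * K) p) => h.
  exists (p - 2 * K); split; [lia | lia | apply: (@eq_bwd K) => //; lia].
exists (p + 2 * n - 2 * K); split; [lia | lia | apply: (@eq_bwd K) => //; lia].
Qed.

Lemma core K (u v : T) : m = 2 * K -> (v.1 <= u.1)%N ->
  exists2 w, w \in Dset n & D v w = D v u + D u w.
Proof.
move=> hmk hvu.
have hp := P_lt v; have hq := P_lt u.
have [t [ht1 ht2 ht3]] := @pickT K (P v) (P u) hmk hp hq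
  ltac:(rewrite /P; have := ltn_ord u.1; lia).
have htn : t %/ 2 < n by lia.
exists (o4 3, inord (t %/ 2)).
  by rewrite inE /= o4E.
have PW : P (o4 3, inord (t %/ 2) : 'I_n) = t by rewrite /P /= o4E // inordK //; lia.
rewrite /D PW (cd_sym (P v) (P u)) /= o4E //.
have := ltn_ord u.1; have := ltn_ord v.1.
rewrite (cd_sym (P u) (P v)) in ht3 *.
lia.
Qed.

End G.

Theorem lemma3p10 (k : nat) (hk : 1 <= k) :
  strong_resolving_set (@Sadj (k.*2.+1)) (Dset (k.*2.+1)).
Proof.
have hm : 2 <= k.*2 by lia.
have hK : k.*2 = 2 * k by rewrite -mul2n.
move=> u v huv.
case: (leqP v.1 u.1) => h.
  have [w hw hD] := @core _ hm k u v hK h.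
  by exists w => //; left; rewrite !gdistE.
have [w hw hD] := @core _ hm k v u hK (ltnW h).
by exists w => //; right; rewrite !gdistE.
Qed.
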